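(* Let $M,N$ be positive integers and $C_0,\dots,C_{N-1}\in\{0,1,\dots,M-1\}$. For $p\in\{0,\dots,M-1\}$, $q\in\{0,\dots,N-1\}$ let $\bm\psi_{p,q}\in\mathbb{C}^N$ have entries $[\bm\psi_{p,q}]_n=\frac{1}{\sqrt N}e^{j\frac{2\pi p}{M}C_n+j\frac{2\pi q}{N}n}$, let $\bm\Psi_q=[\bm\psi_{0,q},\dots,\bm\psi_{M-1,q}]\in\mathbb{C}^{N\times M}$ and $\bm\Psi=[\bm\Psi_0,\dots,\bm\Psi_{N-1}]\in\mathbb{C}^{N\times MN}$. Then $\bm X:=\bm\Psi^H\bm\Psi\in\mathbb{C}^{MN\times MN}$, viewed as an $N\times N$ array of $M\times M$ blocks $\bm X_{q_1,q_2}=\bm\Psi_{q_1}^H\bm\Psi_{q_2}$, is a block circulant matrix with circulant blocks; that is, each block $\bm X_{q_1,q_2}$ is circulant, and $\bm X_{q_1,q_2}=\bm X_{0,(q_2-q_1)\bmod N}$ for all $q_1,q_2\in\{0,\dots,N-1\}$.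
   Context: $j$ denotes the imaginary unit and $(\cdot)^H$ the conjugate transpose. An $M\times M$ matrix $\bm A$ is circulant if $[\bm A]_{p_1,p_2}=[\bm A]_{0,(p_2-p_1)\bmod M}$. *)

(* Defs.v *)
From HB Require Import structures.
From mathcomp Require Import all_boot all_order all_algebra.
From mathcomp Require Import reals trigo.
From mathcomp.real_closed Require Import complex.
Set Implicit Arguments. Unset Strict Implicit. Unset Printing Implicit Defensive.
Import Order.TTheory GRing.Theory Num.Theory.
Local Open Scope ring_scope.
Local Open Scope complex_scope.

Definition expj (R : realType) (theta : R) : R[i] := Complex (cos theta) (sin theta).

Definition ctrmx (R : realType) m n (A : 'M[R[i]]_(m, n)) : 'M[R[i]]_(n, m) :=
  \matrix_(i, j) (A j i)^*.

Definition psi_entry (R : realType) (M N : nat) (Cseq : 'I_N -> 'I_M)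
    (p q : nat) (n : 'I_N) : R[i] :=
  ((Num.sqrt (N%:R : R))^-1)%:C *
  expj (2 * pi * p%:R / M%:R * (Cseq n)%:R + 2 * pi * q%:R / N%:R * n%:R).

(* Psi = [Psi_0, ..., Psi_{N-1}], Psi_q = [psi_{0,q},...,psi_{M-1,q}]:
   column index k = q * M + p. *)
Definition Psi (R : realType) (M N : nat) (Cseq : 'I_N -> 'I_M)
    : 'M[R[i]]_(N, N * M) :=
  \matrix_(n < N, k < N * M) psi_entry R Cseq (k %% M) (k %/ M) n.

Definition Xmat (R : realType) (M N : nat) (Cseq : 'I_N -> 'I_M)
    : 'M[R[i]]_(N * M) := ctrmx (Psi R Cseq) *m Psi R Cseq.

(* block (q1,q2) of an (N*M)x(N*M) matrix, entry (p1,p2) at (q1*M+p1, q2*M+p2) *)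
Definition mxblk (T : Type) (M N : nat) (X : 'M[T]_(N * M)) (q1 q2 : 'I_N)
    : 'M[T]_M :=
  \matrix_(p1, p2) X (mxvec_index q1 p1) (mxvec_index q2 p2).

Definition circulant (T : Type) (M : nat) (A : 'M[T]_M) : Prop :=
  forall p1 p2 p0 j : 'I_M, val p0 = 0%N -> val j = ((p2 + M - p1) %% M)%N ->
    A p1 p2 = A p0 j.

(* Main.v *)
Require Import Defs.
From HB Require Import structures.
From mathcomp Require Import all_boot all_order all_algebra.
From mathcomp Require Import reals trigo.
From mathcomp.real_closed Require Import complex.
From mathcomp Require Import ring lra.
Import Order.TTheory GRing.Theory Num.Theory.
Local Open Scope ring_scope.
Section Helpers.
Local Open Scope complex_scope.

Lemma lemA (R : realType) (a x y : R) :
  (a%:C * expj x)^* * (a%:C * expj y) = (a * a)%:C * expj (y - x).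
Proof.
rewrite /expj cosB sinB /=. congr Complex; ring.
Qed.

Lemma lemBn (R : realType) (x : R) (n : nat) : expj (x + 2 * pi * n%:R) = expj x.
Proof.
rewrite /expj.
have -> : 2 * pi * n%:R = (pi *+ 2) *+ n :> R by rewrite mulr_natr mulr_natl.
by rewrite (periodicn (@cosD2pi R)) (periodicn (@sinD2pi R)).
Qed.

Lemma lemB (R : realType) (x : R) (z : int) : expj (x + 2 * pi * z%:~R) = expj x.
Proof.
case: z => n; first by rewrite lemBn.
rewrite NegzE -[in RHS](subrK (2 * pi * (n.+1)%:R) x) lemBn.
by congr expj; rewrite mulrNz mulrN.
Qed.

Lemma index_allpairs (T1 T2 : eqType) (s1 : seq T1) (s2 : seq T2) x1 x2 :
  x1 \in s1 -> x2 \in s2 ->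
  index (x1, x2) [seq (a, b) | a <- s1, b <- s2] = (index x1 s1 * size s2 + index x2 s2)%N.
Proof.
move=> + in2; elim: s1 => //= x s IH iin.
rewrite index_cat.
case: (eqVneq x x1) => [->|xi].
  by rewrite map_f //= mul0n add0n index_map // => a b [].
rewrite ifN; last by apply/mapP => -[y _ [/eqP]]; rewrite eq_sym (negbTE xi).
rewrite size_map IH; first by rewrite mulSn addnA.
by move: iin; rewrite in_cons eq_sym (negbTE xi).
Qed.

Lemma idx (m n : nat) (i : 'I_m) (j : 'I_n) : val (mxvec_index i j) = (i * n + j)%N.
Proof.
rewrite /mxvec_index /= /enum_rank enum_rank_in.unlock /= insubdK; last first.
  by rewrite unfold_in /= cardE index_mem mem_enum.
rewrite enumT unlock /= /prod_enum index_allpairs ?mem_enum //.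
by rewrite !index_enum_ord size_enum_ord.
Qed.

Lemma modshift (R : realType) (M a b : nat) : (b < M)%N ->
  (a%:R - b%:R : R) = ((a + M - b) %% M)%N%:R - 0%:R + M%:R * ((((a+M-b) %/ M)%:Z - 1)%:~R).
Proof.
move=> hb.
have h : (a + M = (a+M-b)%/M * M + (a+M-b)%%M + b)%N.
  by rewrite -divn_eq subnK // (leq_trans (ltnW hb) (leq_addl _ _)).
have h' := congr1 (fun x => x%:R : R) h; rewrite /= !natrD natrM in h'.
have -> : (a%:R:R) = ((a+M-b)%/M)%:R * M%:R + ((a+M-b)%%M)%:R + b%:R - M%:R.
  by rewrite -h' addrK.
rewrite intrB /=. rewrite -[in X in _ = X](pmulrn 1). ring.
Qed.

Section Main.
Variables (R : realType) (M N : nat) (HM : (0 < M)%N) (HN : (0 < N)%N) (Cseq : 'I_N -> 'I_M).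

Definition Xe (p1 q1 p2 q2 : nat) : R[i] :=
  \sum_(n < N) (psi_entry R Cseq p1 q1 n)^* * psi_entry R Cseq p2 q2 n.

Lemma entry (q1 q2 : 'I_N) (p1 p2 : 'I_M) :
  Xmat R Cseq (mxvec_index q1 p1) (mxvec_index q2 p2) = Xe p1 q1 p2 q2.
Proof.
rewrite /Xmat /Xe !mxE; apply: eq_bigr => n _; rewrite !mxE !idx.
by rewrite !modnMDl !modn_small // !divnMDl // !divn_small // !addn0.
Qed.

Lemma Xe_shift p1 q1 p2 q2 p1' q1' p2' q2' (z1 z2 : int) :
 p2%:R - p1%:R = p2'%:R - p1'%:R + M%:R * z1%:~R :> R ->
 q2%:R - q1%:R = q2'%:R - q1'%:R + N%:R * z2%:~R :> R ->
 Xe p1 q1 p2 q2 = Xe p1' q1' p2' q2'.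
Proof.
move=> h1 h2; apply: eq_bigr => n _; rewrite /psi_entry !lemA; congr (_ * _).
have hM : (M%:R : R) != 0 by rewrite pnatr_eq0 -lt0n.
have hN : (N%:R : R) != 0 by rewrite pnatr_eq0 -lt0n.
rewrite -[in RHS](lemB _ _ (z1 * (Cseq n)%:Z + z2 * n%:Z)); congr expj.
have -> : (p2%:R : R) = p2'%:R - p1'%:R + M%:R * z1%:~R + p1%:R by rewrite -h1 subrK.
have -> : (q2%:R : R) = q2'%:R - q1'%:R + N%:R * z2%:~R + q1%:R by rewrite -h2 subrK.
rewrite intrD !intrM -!pmulrn.
field; by apply/andP.
Qed.
Lemma entry' (q1 q2 : 'I_N) (p1 p2 : 'I_M) :
  mxblk (Xmat R Cseq) q1 q2 p1 p2 = Xe p1 q1 p2 q2.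
Proof. by rewrite /mxblk mxE entry. Qed.
End Main.
End Helpers.

Theorem lemma3 (R : realType) (M N : nat) (HM : (0 < M)%N) (HN : (0 < N)%N)
    (Cseq : 'I_N -> 'I_M) :
  forall q1 q2 : 'I_N,
    circulant (mxblk (Xmat R Cseq) q1 q2) /\
    (forall q0 d : 'I_N, val q0 = 0%N -> val d = ((q2 + N - q1) %% N)%N ->
       mxblk (Xmat R Cseq) q1 q2 = mxblk (Xmat R Cseq) q0 d).
Proof.
move=> q1 q2; split.
  move=> p1 p2 p0 j h0 hj; rewrite !(entry' R M N HM Cseq).
  have h0' : nat_of_ord p0 = 0%N := h0.
  have hj' : nat_of_ord j = ((p2 + M - p1) %% M)%N := hj.
  apply: (@Xe_shift R M N HM HN Cseq _ _ _ _ _ _ _ _ ((((p2+M-p1) %/ M)%:Z - 1)) 0).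
    by rewrite h0' hj' (modshift R M p2 p1 (ltn_ord p1)).
  by rewrite mulr0 addr0.
move=> q0 d h0 hd; apply/matrixP => p1 p2; rewrite !(entry' R M N HM Cseq).
have h0' : nat_of_ord q0 = 0%N := h0.
have hd' : nat_of_ord d = ((q2 + N - q1) %% N)%N := hd.
apply: (@Xe_shift R M N HM HN Cseq _ _ _ _ _ _ _ _ 0 ((((q2+N-q1) %/ N)%:Z - 1))).
  by rewrite mulr0 addr0.
by rewrite h0' hd' (modshift R N q2 q1 (ltn_ord q1)).
Qed.
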